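(* Let $n\ge 1$ and let $U\in\mathcal{C}_2^{(n)}$ be a Clifford unitary with Pauli periodicity $m\ge 1$. Then the controlled gate $CU$ lies strictly in level $m+2$ of the $(n+1)$-qubit Clifford hierarchy: $$CU\in\mathcal{C}_{m+2}^{(n+1)}\setminus\mathcal{C}_{m+1}^{(n+1)}.$$
   Context: The $n$-qubit Pauli group is $\mathcal{P}_n=\{\omega P_1\otimes\cdots\otimes P_n:\ \omega\in\{\pm1,\pm \mathrm{i}\},\ P_j\in\{I,X,Y,Z\}\}$. The Clifford hierarchy: $\mathcal{C}_1^{(n)}:=\mathcal{P}_n$, $\mathcal{C}_{k+1}^{(n)}:=\{U\in U(2^n):\ UPU^\dagger\in\mathcal{C}_k^{(n)}\ \forall P\in\mathcal{P}_n\}$; $\mathcal{C}_2^{(n)}$ is the Clifford group. For $U\in U(2^n)$, the controlled gate is $CU:=\ket{0}\!\bra{0}\otimes I_{2^n}+\ket{1}\!\bra{1}\otimes U\in U(2^{n+1})$ (first qubit is the control). A unitary $U$ is Pauli-periodic if $U^{2^t}\in\mathcal{P}_n$ for some integer $t\ge0$, and its Pauli periodicity is $m=\min\{t\ge 0:\ U^{2^t}\in\mathcal{P}_n\}$ (membership in $\mathcal{P}_n$ exactly, i.e. with phase in $\{\pm1,\pm\mathrm{i}\}$). *)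

(* Defs.v *)
(* Complex scalars: an arbitrary numClosedFieldType C
   (e.g. algC, or the complex numbers R[i] over a real closed field). *)
From HB Require Import structures.
From mathcomp Require Import all_boot all_order all_algebra.
Set Implicit Arguments. Unset Strict Implicit. Unset Printing Implicit Defensive.
Import Order.TTheory GRing.Theory Num.Theory.
Local Open Scope ring_scope.

Section Qubits.
Variable C : numClosedFieldType.

(* Entry (a,b) (row bit a, column bit b) of the single-qubit Pauli
   matrix number k : 0 = I, 1 = X, 2 = Y, 3 = Z. *)
Definition sigma (k : 'I_4) (a b : bool) : C :=
  match val k with
  | 0 => if a == b then 1 else 0
  | 1 => if a == b then 0 else 1
  | 2 => if a == b then 0 else if a then 'i else - 'i
  | _ => if a == b then (if a then -1 else 1) else 0
  end.

Definition bit (j r : nat) : bool := odd (r %/ 2 ^ j).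

(* The Pauli string  i^w * sigma_{p_0} (x) ... (x) sigma_{p_{n-1}},
   written out entrywise (qubit j <-> bit j of the basis index). *)
Definition pauli_mx (n : nat) (w : 'I_4) (p : 'I_n -> 'I_4) : 'M[C]_(2 ^ n) :=
  \matrix_(r, c) ('i ^+ w * \prod_(j < n) sigma (p j) (bit j r) (bit j c)).

Definition is_pauli (n : nat) (P : 'M[C]_(2 ^ n)) : Prop :=
  exists (w : 'I_4) (p : 'I_n -> 'I_4), P = pauli_mx w p.

Definition adj (d : nat) (U : 'M[C]_d) : 'M[C]_d := (map_mx Num.conj U)^T.

Definition unitary (d : nat) (U : 'M[C]_d) : Prop := U *m adj U = 1%:M.

(* hier_aux k = level k+1 of the Clifford hierarchy *)
Fixpoint hier_aux (k n : nat) (U : 'M[C]_(2 ^ n)) : Prop :=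
  match k with
  | 0 => is_pauli U
  | k'.+1 => unitary U /\
             forall P : 'M[C]_(2 ^ n), is_pauli P -> hier_aux k' (U *m P *m adj U)
  end.

Definition in_clifford_hierarchy (k n : nat) (U : 'M[C]_(2 ^ n)) : Prop :=
  hier_aux k.-1 U.

Definition mxpow (d : nat) (U : 'M[C]_d) (e : nat) : 'M[C]_d :=
  iter e (mulmx U) 1%:M.

Definition pauli_periodicity (n : nat) (U : 'M[C]_(2 ^ n)) (m : nat) : Prop :=
  is_pauli (mxpow U (2 ^ m)) /\ forall t, (t < m)%N -> ~ is_pauli (mxpow U (2 ^ t)).

Lemma two_exp_succ (n : nat) : (2 ^ n + 2 ^ n = 2 ^ n.+1)%N.
Proof. by rewrite expnS mul2n addnn. Qed.

(* Controlled gate CU = |0><0| (x) I + |1><1| (x) U, first qubit = control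
   (the most significant bit of the basis index). *)
Definition ctrl (n : nat) (U : 'M[C]_(2 ^ n)) : 'M[C]_(2 ^ n.+1) :=
  castmx (two_exp_succ n, two_exp_succ n) (block_mx 1%:M 0 0 U).

End Qubits.

(* Main.v *)
Require Import Defs.
From mathcomp Require Import all_boot all_order all_algebra.
From mathcomp Require Import ring.
Set Implicit Arguments. Unset Strict Implicit. Unset Printing Implicit Defensive.
Import Order.TTheory GRing.Theory Num.Theory.
Local Open Scope ring_scope.


Section Work1.
Variable C : numClosedFieldType.

Lemma adj_mul d (A B : 'M[C]_d) : adj (A *m B) = adj B *m adj A.
Proof. by rewrite /adj map_mxM trmx_mul. Qed.
Lemma adj_adj d (A : 'M[C]_d) : adj (adj A) = A.
Proof. by apply/matrixP=> i j; rewrite !mxE conjCK. Qed.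
Lemma adj_one d : adj (1%:M : 'M[C]_d) = 1%:M.
Proof. by apply/matrixP=> i j; rewrite !mxE eq_sym; case: eqP; rewrite ?conjC1 ?conjC0. Qed.
Lemma adj_scale d c (A : 'M[C]_d) : adj (c *: A) = Num.conj c *: adj A.
Proof. by apply/matrixP=> i j; rewrite !mxE rmorphM. Qed.
Lemma adj_zero d : adj (0 : 'M[C]_d) = 0.
Proof. by apply/matrixP=> i j; rewrite !mxE conjC0. Qed.

Lemma castmx_mulmx m m' (e : m = m') (A B : 'M[C]_m) :
  castmx (e,e) (A *m B) = castmx (e,e) A *m castmx (e,e) B.
Proof. by case: m' / e; rewrite !castmx_id. Qed.
Lemma castmx_adj m m' (e : m = m') (A : 'M[C]_m) :
  castmx (e,e) (adj A) = adj (castmx (e,e) A).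
Proof. by case: m' / e; rewrite !castmx_id. Qed.
Lemma castmx_scale m m' (e : m = m') c (A : 'M[C]_m) :
  castmx (e,e) (c *: A) = c *: castmx (e,e) A.
Proof. by case: m' / e; rewrite !castmx_id. Qed.
Lemma castmx_one m m' (e : m = m') :
  castmx (e,e) (1%:M : 'M[C]_m) = 1%:M.
Proof. by case: m' / e; rewrite !castmx_id. Qed.

Definition blk n (A B D E : 'M[C]_(2 ^ n)) : 'M[C]_(2 ^ n.+1) :=
  castmx (two_exp_succ n, two_exp_succ n) (block_mx A B D E).

Lemma ctrlE n (U : 'M[C]_(2 ^ n)) : ctrl U = blk 1%:M 0 0 U.
Proof. by []. Qed.

Lemma blk_mul n (A B D E A' B' D' E' : 'M[C]_(2 ^ n)) :
  blk A B D E *m blk A' B' D' E' =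
  blk (A *m A' + B *m D') (A *m B' + B *m E') (D *m A' + E *m D') (D *m B' + E *m E').
Proof. by rewrite /blk -castmx_mulmx mulmx_block. Qed.

Lemma blk_adj n (A B D E : 'M[C]_(2 ^ n)) :
  adj (blk A B D E) = blk (adj A) (adj D) (adj B) (adj E).
Proof. by rewrite /blk -castmx_adj /adj map_block_mx tr_block_mx. Qed.

Lemma blk_inj n (A B D E A' B' D' E' : 'M[C]_(2 ^ n)) :
  blk A B D E = blk A' B' D' E' -> [/\ A = A', B = B', D = D' & E = E'].
Proof. by move/(can_inj (castmxK _ _))/eq_block_mx. Qed.

Lemma blk1 n : blk (1%:M : 'M[C]_(2 ^ n)) 0 0 1%:M = 1%:M.
Proof. by rewrite /blk -scalar_mx_block castmx_one. Qed.

Lemma blk_scale n c (A B D E : 'M[C]_(2 ^ n)) :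
  c *: blk A B D E = blk (c *: A) (c *: B) (c *: D) (c *: E).
Proof. by rewrite /blk -castmx_scale scale_block_mx. Qed.

End Work1.


Section Work2.
Variable C : numClosedFieldType.

Definition m2mul (A B : bool -> bool -> C) a b := A a false * B false b + A a true * B true b.

Definition T n (A : bool -> bool -> C) (M : 'M[C]_(2 ^ n)) : 'M[C]_(2 ^ n.+1) :=
  blk (A false false *: M) (A false true *: M) (A true false *: M) (A true true *: M).

Lemma T_mul n A B (M N : 'M[C]_(2 ^ n)) : T A M *m T B N = T (m2mul A B) (M *m N).
Proof.
rewrite /T blk_mul /m2mul; congr blk;
  by rewrite -!scalemxAl -!scalemxAr !scalerA scalerDl.
Qed.

Lemma T_adj n A (M : 'M[C]_(2 ^ n)) : adj (T A M) = T (fun a b => Num.conj (A b a)) (adj M).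
Proof. by rewrite /T blk_adj !adj_scale. Qed.

Lemma T_ext n A B (M : 'M[C]_(2 ^ n)) : (forall a b, A a b = B a b) -> T A M = T B M.
Proof. by move=> h; rewrite /T !h. Qed.

Lemma T_scaleA n c A (M : 'M[C]_(2 ^ n)) : T (fun a b => c * A a b) M = T A (c *: M).
Proof. by rewrite /T !scalerA; congr blk; rewrite mulrC. Qed.

Lemma T_scaleM n c A (M : 'M[C]_(2 ^ n)) : T A (c *: M) = c *: T A M.
Proof. by rewrite /T blk_scale !scalerA; congr blk; rewrite mulrC. Qed.

Lemma T_one n : T (fun a b => (a == b)%:R) (1%:M : 'M[C]_(2 ^ n)) = 1%:M.
Proof. by rewrite /T /= scale1r scale0r blk1. Qed.

Lemma sqi : 'i * 'i = -1 :> C.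
Proof. by rewrite -expr2 sqrCi. Qed.

Definition is4 (x : C) := exists j : nat, x = 'i ^+ j.

Lemma is4_1 : is4 1. Proof. by exists 0%N. Qed.
Lemma is4_i : is4 'i. Proof. by exists 1%N. Qed.
Lemma is4_m1 : is4 (-1). Proof. by exists 2%N; rewrite sqrCi. Qed.
Lemma is4_mi : is4 (-'i). Proof. by exists 3%N; rewrite exprS sqrCi mulrN1. Qed.
Lemma is4M x y : is4 x -> is4 y -> is4 (x * y).
Proof. by move=> [j ->] [k ->]; exists (j + k)%N; rewrite exprD. Qed.
Lemma is4N x : is4 x -> is4 (- x).
Proof. by move=> h; rewrite -mulN1r; apply: is4M h; apply: is4_m1. Qed.
Lemma conjCi' : Num.conj ('i : C) = - 'i.
Proof. by rewrite conjCi. Qed.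
Lemma conjN' (x : C) : Num.conj (- x) = - Num.conj x.
Proof. by rewrite rmorphN. Qed.
Lemma is4C x : is4 x -> is4 (Num.conj x).
Proof. by move=> [j ->]; rewrite rmorphXn /= conjCi; exists (3 * j)%N; rewrite exprM exprS sqrCi mulrN1. Qed.
Lemma i4 : 'i ^+ 4 = 1 :> C.
Proof. by rewrite (_ : 4 = 2 * 2)%N // exprM sqrCi sqrrN expr1n. Qed.
Lemma is4_conjM x : is4 x -> Num.conj x * x = 1.
Proof.
move=> [j ->]; rewrite rmorphXn /= conjCi -exprMn mulNr sqi opprK expr1n //.
Qed.

End Work2.


Ltac ord4 k := case: k => [[|[|[|[|?]]]] ?] //.
Ltac simpC := rewrite ?(mul0r,mulr0,mul1r,mulr1,add0r,addr0,mulrN,mulNr,opprK,sqi,mulN1r,mulrN1,oppr0,conjC0,conjC1,conjCi',conjN') //.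
Ltac is4t := first [apply: is4_1|apply: is4_i|apply: is4_m1|apply: is4_mi].

Section Work3.
Variable C : numClosedFieldType.

Definition o4 (j : nat) (h : (j < 4)%N) : 'I_4 := Ordinal h.

Ltac fin := split; [is4t | move=> [] []; rewrite /m2mul /sigma /=; simpC].
Ltac tryc := first [ solve [exists (@o4 0 isT); fin] | solve [exists (@o4 1 isT); fin]
                   | solve [exists (@o4 2 isT); fin] | solve [exists (@o4 3 isT); fin]].

Lemma sig_mul (k k' : 'I_4) : exists (phi : C) c, is4 phi /\
  forall a b, m2mul (sigma C k) (sigma C k') a b = phi * sigma C c a b.
Proof.
ord4 k; ord4 k';
 first [ solve [exists 1; tryc] | solve [exists 'i; tryc] | solve [exists (-1); tryc]
       | solve [exists (-'i); tryc]].
Qed.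

Lemma sig_comm (k k' : 'I_4) : exists t : C, (t = 1 \/ t = -1) /\
  forall a b, m2mul (sigma C k) (sigma C k') a b = t * m2mul (sigma C k') (sigma C k) a b.
Proof.
ord4 k; ord4 k';
 first [ solve [exists 1; split; [left=>//| move=> [] []; rewrite /m2mul /sigma /=; simpC]]
       | solve [exists (-1); split; [right=>//| move=> [] []; rewrite /m2mul /sigma /=; simpC]]].
Qed.


Lemma sig_herm (k : 'I_4) a b : Num.conj (sigma C k b a) = sigma C k a b.
Proof. ord4 k; case: a; case: b; rewrite /sigma /=. all: simpC. Qed.

Lemma sig_sq (k : 'I_4) a b : m2mul (sigma C k) (sigma C k) a b = (a == b)%:R.
Proof. by ord4 k; case: a; case: b; rewrite /m2mul /sigma /=; simpC. Qed.

End Work3.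


Lemma bit_lo n k : (k < 2 ^ n)%N -> bit n k = false.
Proof. by move=> h; rewrite /bit divn_small. Qed.

Lemma bit_hi n k : (k < 2 ^ n)%N -> bit n (2 ^ n + k) = true.
Proof. by move=> h; rewrite /bit divnDl // divnn expn_gt0 /= (divn_small h). Qed.

Lemma bit_hi2 n i k : (i < n)%N -> bit i (2 ^ n + k) = bit i k.
Proof.
move=> h; rewrite /bit divnDl ?dvdn_exp2l ?(ltnW h) // -expnB ?(ltnW h) //.
by rewrite oddD oddX subn_eq0 leqNgt h.
Qed.

Section Work4.
Variable C : numClosedFieldType.

Lemma pauli_T n (w : 'I_4) (p : 'I_n.+1 -> 'I_4) :
  pauli_mx C w p = T (sigma C (p ord_max))
                     (pauli_mx C w (fun j : 'I_n => p (widen_ord (leqnSn n) j))).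
Proof.
apply/matrixP => r c; rewrite /T /blk castmxE mxE big_ord_recr /=.
set r0 := cast_ord _ r; set c0 := cast_ord _ c.
have er : (r : nat) = r0 by [].
have ec : (c : nat) = c0 by [].
have key : forall (x : 'I_(2 ^ n.+1)) (x0 : 'I_(2 ^ n + 2 ^ n)), (x : nat) = x0 ->
   exists (x1 : 'I_(2 ^ n)) (hb : bool),
     (forall j : 'I_n, bit j x = bit j x1) /\ bit n x = hb /\
     (x0 = if hb then rshift _ x1 else lshift _ x1).
  move=> x x0 ex; case: (splitP x0) => x1 hx1.
    exists x1, false; split; [|split].
    - by move=> j; rewrite ex hx1.
    - by rewrite ex hx1 bit_lo.
    - by apply: val_inj; rewrite /= hx1.
  exists x1, true; split; [|split].
  - by move=> j; rewrite ex hx1 bit_hi2.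
  - by rewrite ex hx1 bit_hi.
  - by apply: val_inj; rewrite /= hx1.
have [r1 [hr [br [Br Er]]]] := key r r0 er.
have [c1 [hc [bc [Bc Ec]]]] := key c c0 ec.
have Hprod : \prod_(i < n) sigma C (p (widen_ord (leqnSn n) i)) (bit (widen_ord (leqnSn n) i) r) (bit (widen_ord (leqnSn n) i) c)
   = \prod_(i < n) sigma C (p (widen_ord (leqnSn n) i)) (bit i r1) (bit i c1).
  by apply: eq_bigr => i _; rewrite /= br bc.
have Br' : bit (@ord_max n) r = hr := Br.
have Bc' : bit (@ord_max n) c = hc := Bc.
rewrite Hprod Er Ec Br' Bc'.
case: hr {Br Br' Er}; case: hc {Bc Bc' Ec};
  rewrite ?block_mxEul ?block_mxEur ?block_mxEdl ?block_mxEdr !mxE; ring.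
Qed.

End Work4.


Section Work5.
Variable C : numClosedFieldType.

Lemma pauli_ext n w (p q : 'I_n -> 'I_4) : (forall j, p j = q j) ->
  pauli_mx C w p = pauli_mx C w q.
Proof. by move=> h; apply/matrixP=> r c; rewrite !mxE; congr (_ * _); apply: eq_bigr => j _; rewrite h. Qed.

Lemma i_mod k : 'i ^+ (k %% 4) = 'i ^+ k :> C.
Proof. by rewrite {2}(divn_eq k 4) exprD mulnC exprM i4 expr1n mul1r. Qed.

Lemma pauli_scale n (P : 'M[C]_(2 ^ n)) phi : is4 phi -> is_pauli P -> is_pauli (phi *: P).
Proof.
move=> [j ->] [w [p ->]]; exists (Ordinal (ltn_pmod (j + w) (isT : (0 < 4)%N))), p.
by apply/matrixP=> r c; rewrite !mxE /= i_mod exprD mulrA.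
Qed.

Lemma pauli0 (P : 'M[C]_(2 ^ 0)) : is_pauli P <-> exists j, P = ('i ^+ j)%:M.
Proof.
have E : forall j, ('i ^+ j)%:M = pauli_mx C (Ordinal (ltn_pmod j (isT : (0 < 4)%N))) (fun _ => ord0) :> 'M[C]_(2 ^ 0).
  move=> j; apply/matrixP=> r c; rewrite !mxE big_ord0 mulr1 /= i_mod.
  have -> : r = c by apply: val_inj; case: r => [[|?] ?]; case: c => [[|?] ?].
  by rewrite eqxx mulr1n.
split.
  move=> [w [p ->]]; exists w; rewrite E.
  have -> : Ordinal (ltn_pmod w (isT : (0 < 4)%N)) = w by apply: val_inj; rewrite /= modn_small.
  by apply: pauli_ext => -[].
by move=> [j ->]; rewrite E; eexists; eexists.
Qed.

Lemma pauli_cons n (k : 'I_4) (M : 'M[C]_(2 ^ n)) : is_pauli M -> is_pauli (T (sigma C k) M).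
Proof.
move=> [w [q ->]].
pose p := fun j : 'I_n.+1 => oapp q k (unlift ord_max j).
exists w, p; rewrite pauli_T /p unlift_none /=; congr T; apply: pauli_ext => j.
have -> : widen_ord (leqnSn n) j = lift ord_max j.
  by apply: val_inj; rewrite /= /bump leqNgt ltn_ord.
by rewrite liftK.
Qed.

Lemma pauli_dec n (P : 'M[C]_(2 ^ n.+1)) : is_pauli P ->
  exists k (M : 'M[C]_(2 ^ n)), is_pauli M /\ P = T (sigma C k) M.
Proof.
move=> [w [p ->]]; rewrite pauli_T; eexists; eexists; split; last by reflexivity.
by eexists; eexists.
Qed.

Lemma adj_scalar d (a : C) : adj (a%:M : 'M[C]_d) = (Num.conj a)%:M.
Proof. by apply/matrixP=> i j; rewrite !mxE eq_sym; case: eqP => _; rewrite ?mulr1n ?mulr0n ?conjC0. Qed.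

Lemma pauli_mul n (P Q : 'M[C]_(2 ^ n)) : is_pauli P -> is_pauli Q -> is_pauli (P *m Q).
Proof.
elim: n P Q => [|n IH] P Q.
  by move=> /pauli0 [a ->] /pauli0 [b ->]; apply/pauli0; exists (a + b)%N; rewrite -scalar_mxM exprD.
move=> /pauli_dec [k [M [hM ->]]] /pauli_dec [k' [N [hN ->]]].
rewrite T_mul; have [phi [c [h4 hc]]] := sig_mul C k k'.
rewrite (T_ext _ hc) T_scaleA; apply: pauli_cons; apply: pauli_scale h4 _.
exact: IH.
Qed.

Lemma pauli_adjE n (P : 'M[C]_(2 ^ n)) : is_pauli P ->
  exists rho : C, (rho = 1 \/ rho = -1) /\ adj P = rho *: P.
Proof.
elim: n P => [|n IH] P.
  move=> /pauli0 [j ->]; exists ((-1) ^+ j); split.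
    by rewrite -signr_odd; case: (odd j); [right; rewrite expr1|left; rewrite expr0].
  rewrite adj_scalar rmorphXn /= conjCi.
  have -> : (- 'i) ^+ j = (-1) ^+ j * 'i ^+ j :> C by rewrite -exprMn mulN1r.
  by apply/matrixP=> r c; rewrite !mxE mulrnAr.
move=> /pauli_dec [k [M [hM ->]]].
have [rho [hr e]] := IH M hM.
exists rho; split => //.
rewrite T_adj (T_ext _ (fun a b => sig_herm C k a b)) e T_scaleM //.
Qed.

Lemma pauli_adj n (P : 'M[C]_(2 ^ n)) : is_pauli P -> is_pauli (adj P).
Proof.
move=> h; have [rho [[->|->] ->]] := pauli_adjE h; apply: pauli_scale h.
  exact: is4_1.
exact: is4_m1.
Qed.

Lemma pauli_unitary n (P : 'M[C]_(2 ^ n)) : is_pauli P -> P *m adj P = 1%:M.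
Proof.
elim: n P => [|n IH] P.
  move=> /pauli0 [j ->]; rewrite adj_scalar -scalar_mxM mulrC is4_conjM //.
  by exists j.
move=> /pauli_dec [k [M [hM ->]]].
rewrite T_adj (T_ext _ (fun a b => sig_herm C k a b)) T_mul IH //.
rewrite (T_ext _ (fun a b => sig_sq C k a b)); exact: T_one.
Qed.

Lemma pauli_unitaryV n (P : 'M[C]_(2 ^ n)) : is_pauli P -> adj P *m P = 1%:M.
Proof. by move=> h; apply: mulmx1C; apply: pauli_unitary. Qed.

Lemma pauli_comm n (P Q : 'M[C]_(2 ^ n)) : is_pauli P -> is_pauli Q ->
  exists s : C, (s = 1 \/ s = -1) /\ P *m Q = s *: (Q *m P).
Proof.
elim: n P Q => [|n IH] P Q.
  move=> /pauli0 [a ->] /pauli0 [b ->]; exists 1; split; first by left.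
  by rewrite scale1r -!scalar_mxM mulrC.
move=> /pauli_dec [k [M [hM ->]]] /pauli_dec [k' [N [hN ->]]].
have [t [ht hc]] := sig_comm C k k'.
have [s [hs e]] := IH M N hM hN.
exists (t * s); split.
  by case: ht => ->; case: hs => ->; rewrite ?mul1r ?mulr1 ?mulN1r ?opprK; auto.
rewrite !T_mul (T_ext _ hc) T_scaleA e scalerA T_scaleM //.
Qed.

Lemma pauli_one n : is_pauli (1%:M : 'M[C]_(2 ^ n)).
Proof.
have h : is_pauli (pauli_mx C ord0 (fun _ : 'I_n => ord0)) by eexists; eexists.
by rewrite -(pauli_unitary h); apply: pauli_mul h (pauli_adj h).
Qed.

End Work5.


Section Work6.
Variable C : numClosedFieldType.

Definition clif n (U : 'M[C]_(2 ^ n)) := hier_aux 1 U.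
Definition biclif n (U : 'M[C]_(2 ^ n)) := clif U /\ clif (adj U).

Lemma unitaryV n (U : 'M[C]_(2 ^ n)) : unitary U -> adj U *m U = 1%:M.
Proof. exact: mulmx1C. Qed.

Lemma clif_unitary n (U : 'M[C]_(2 ^ n)) : clif U -> unitary U.
Proof. by case. Qed.

Lemma clif_pauli n (U P : 'M[C]_(2 ^ n)) : clif U -> is_pauli P -> is_pauli (U *m P *m adj U).
Proof. by case=> _ h /h. Qed.

Lemma pauli_clif n (P : 'M[C]_(2 ^ n)) : is_pauli P -> clif P.
Proof.
move=> h; split; first exact: pauli_unitary.
move=> Q hQ /=; apply: pauli_mul (pauli_adj h); exact: pauli_mul.
Qed.

Lemma unitary_mul n (A B : 'M[C]_(2 ^ n)) : unitary A -> unitary B -> unitary (A *m B).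
Proof.
rewrite /unitary => hA hB; rewrite adj_mul mulmxA -(mulmxA A) hB mulmx1 //.
Qed.

Lemma clif_mul n (A B : 'M[C]_(2 ^ n)) : clif A -> clif B -> clif (A *m B).
Proof.
move=> hA hB; split; first by apply: unitary_mul; apply: clif_unitary.
move=> P hP /=; rewrite adj_mul.
have -> : A *m B *m P *m (adj B *m adj A) = A *m (B *m P *m adj B) *m adj A by rewrite !mulmxA.
by apply: clif_pauli hA _; apply: clif_pauli hB _.
Qed.

Lemma biclif_mul n (A B : 'M[C]_(2 ^ n)) : biclif A -> biclif B -> biclif (A *m B).
Proof.
move=> [hA hA'] [hB hB']; split; first exact: clif_mul.
by rewrite adj_mul; apply: clif_mul.
Qed.

Lemma pauli_biclif n (P : 'M[C]_(2 ^ n)) : is_pauli P -> biclif P.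
Proof. by move=> h; split; apply: pauli_clif => //; apply: pauli_adj. Qed.

Lemma biclif_adj n (A : 'M[C]_(2 ^ n)) : biclif A -> biclif (adj A).
Proof. by move=> [h1 h2]; split; rewrite ?adj_adj. Qed.

Lemma hier_up k n (U : 'M[C]_(2 ^ n)) : clif U -> hier_aux k.+1 U.
Proof.
elim: k U => [|k IH] U // hU; split; first exact: clif_unitary.
move=> P hP; apply: IH; apply: pauli_clif; exact: clif_pauli.
Qed.

Lemma hier_unitary k n (U : 'M[C]_(2 ^ n)) : hier_aux k.+1 U -> unitary U.
Proof. by case. Qed.

Lemma conj_inv k n (K W : 'M[C]_(2 ^ n)) : biclif K -> hier_aux k W ->
  hier_aux k (K *m W *m adj K).
Proof.
move=> [hK hK']; elim: k W => [|k IH] W /=.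
  by move=> hW; apply: clif_pauli.
move=> [uW hW]; split.
  apply: unitary_mul; first apply: unitary_mul; first exact: clif_unitary.
    exact: uW.
  by have := clif_unitary hK'.
move=> P hP.
have -> : K *m W *m adj K *m P *m adj (K *m W *m adj K)
   = K *m (W *m (adj K *m P *m adj (adj K)) *m adj W) *m adj K.
  by rewrite !adj_mul !adj_adj !mulmxA.
apply: IH; apply: hW; exact: clif_pauli.
Qed.

Lemma left_mul k n (K W : 'M[C]_(2 ^ n)) : biclif K -> hier_aux k.+1 W ->
  hier_aux k.+1 (K *m W).
Proof.
move=> hK [uW hW]; split.
  by apply: unitary_mul => //; apply: clif_unitary; case: hK.
move=> P hP.
have -> : K *m W *m P *m adj (K *m W) = K *m (W *m P *m adj W) *m adj K.
  by rewrite !adj_mul !mulmxA.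
by apply: conj_inv => //; apply: hW.
Qed.

Lemma right_mul k n (K W : 'M[C]_(2 ^ n)) : clif K -> hier_aux k.+1 W ->
  hier_aux k.+1 (W *m K).
Proof.
move=> hK [uW hW]; split.
  by apply: unitary_mul => //; apply: clif_unitary.
move=> P hP.
have -> : W *m K *m P *m adj (W *m K) = W *m (K *m P *m adj K) *m adj W.
  by rewrite !adj_mul !mulmxA.
by apply: hW; apply: clif_pauli.
Qed.

End Work6.


Ltac simpM := rewrite ?(mul1mx, mulmx1, mul0mx, mulmx0, addr0, add0r, scale0r, scale1r, scaler0,
   mul0r, mulr0, mul1r, mulr1, oppr0, adj_zero, adj_one).

Section Work7.
Variable C : numClosedFieldType.

Definition idT n (K : 'M[C]_(2 ^ n)) : 'M[C]_(2 ^ n.+1) := blk K 0 0 K.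

Lemma idTE n (K : 'M[C]_(2 ^ n)) : idT K = T (sigma C (@o4 0 isT)) K.
Proof. by rewrite /T /sigma /=; simpM. Qed.

Lemma idT_mul n (K L : 'M[C]_(2 ^ n)) : idT K *m idT L = idT (K *m L).
Proof. by rewrite /idT blk_mul; simpM. Qed.

Lemma idT_adj n (K : 'M[C]_(2 ^ n)) : adj (idT K) = idT (adj K).
Proof. by rewrite /idT blk_adj; simpM. Qed.

Lemma idT_one n : idT (1%:M : 'M[C]_(2 ^ n)) = 1%:M.
Proof. exact: blk1. Qed.

Lemma sig0l (A : bool -> bool -> C) a b : m2mul (sigma C (@o4 0 isT)) A a b = A a b.
Proof. by case: a; rewrite /m2mul /sigma /=; simpM; rewrite ?mul0r ?mul1r ?addr0 ?add0r. Qed.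
Lemma sig0r (A : bool -> bool -> C) a b : m2mul A (sigma C (@o4 0 isT)) a b = A a b.
Proof. by case: b; rewrite /m2mul /sigma /=; rewrite ?mulr0 ?mulr1 ?addr0 ?add0r. Qed.

Lemma idT_clif n (K : 'M[C]_(2 ^ n)) : clif K -> clif (idT K).
Proof.
move=> hK; split.
  by rewrite /unitary idT_adj idT_mul (clif_unitary hK) idT_one.
move=> P /pauli_dec [k [M [hM ->]]] /=.
rewrite idT_adj !idTE !T_mul (T_ext _ (sig0r _)) (T_ext _ (sig0l _)).
apply: pauli_cons; exact: clif_pauli.
Qed.

Lemma idT_biclif n (K : 'M[C]_(2 ^ n)) : biclif K -> biclif (idT K).
Proof. by move=> [h1 h2]; split; rewrite ?idT_adj; apply: idT_clif. Qed.

Lemma ctrl_adj n (U : 'M[C]_(2 ^ n)) : adj (ctrl U) = ctrl (adj U).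
Proof. by rewrite !ctrlE blk_adj; simpM. Qed.

Lemma ctrl_mul n (U V : 'M[C]_(2 ^ n)) : ctrl U *m ctrl V = ctrl (U *m V).
Proof. by rewrite !ctrlE blk_mul; simpM. Qed.

Lemma ctrl_one n : ctrl (1%:M : 'M[C]_(2 ^ n)) = 1%:M.
Proof. by rewrite ctrlE blk1. Qed.

Lemma ctrl_unitary n (U : 'M[C]_(2 ^ n)) : unitary U -> unitary (ctrl U).
Proof. by rewrite /unitary ctrl_adj ctrl_mul => ->; rewrite ctrl_one. Qed.

Lemma diagP n (M : 'M[C]_(2 ^ n)) x y : is_pauli M -> (x = 1 \/ x = -1) -> (y = 1 \/ y = -1) ->
  is_pauli (blk (x *: M) 0 0 (y *: M)).
Proof.
move=> hM hx hy.
have hM' : is_pauli (- M) by rewrite -scaleN1r; apply: pauli_scale hM; apply: is4_m1.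
have E : forall k (N : 'M[C]_(2 ^ n)), is_pauli N -> is_pauli (T (sigma C k) N) by move=> k N; apply: pauli_cons.
Ltac fin7 k N := have := E (@o4 k isT) N; rewrite /T /sigma /=; simpM; rewrite ?scaleN1r ?opprK ?oppr0; apply.
case: hx => ->; case: hy => ->.
- by fin7 0%N M.
- by fin7 3%N M.
- by fin7 3%N (- M).
- by fin7 0%N (- M).
Qed.

Lemma offP n (R : 'M[C]_(2 ^ n)) x y : is_pauli R -> is4 y -> (x = y \/ x = - y) ->
  is_pauli (blk 0 (x *: R) (y *: R) 0).
Proof.
move=> hR hy hx.
have hyR : is_pauli (y *: R) by apply: pauli_scale.
have hyR' : is_pauli ((- 'i * y) *: R) by apply: pauli_scale => //; apply: is4M hy; apply: is4_mi.
case: hx => ->.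
- have := pauli_cons (@o4 1 isT) hyR; rewrite /T /sigma /=; simpM; apply.
- have := pauli_cons (@o4 2 isT) hyR'; rewrite /T /sigma /=; simpM.
  rewrite !scalerA !mulrA !mulrN !mulNr opprK sqi !mulN1r opprK; apply.
Qed.

End Work7.



Section Work8.
Variable C : numClosedFieldType.

Lemma ctrl_T n (P M : 'M[C]_(2 ^ n)) A :
  ctrl P *m T A M *m adj (ctrl P) =
  blk (A false false *: M) (A false true *: (M *m adj P)) (A true false *: (P *m M))
      (A true true *: (P *m M *m adj P)).
Proof.
rewrite ctrl_adj !ctrlE /T !blk_mul; simpM.
by congr blk; rewrite ?scalemxAl ?scalemxAr // -scalemxAr scalemxAl.
Qed.

Lemma ctrl_pauli_clif n (P : 'M[C]_(2 ^ n)) : is_pauli P -> clif (ctrl P).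
Proof.
move=> hP; split; first by apply: ctrl_unitary; apply: pauli_unitary.
move=> Q /pauli_dec [k [M [hM ->]]] /=.
rewrite ctrl_T.
have [rho [hr er]] := pauli_adjE hP.
have [s [hs es]] := pauli_comm hP hM.
have ss : s * s = 1 by case: hs => ->; rewrite ?mulr1 ?mulN1r ?opprK.
have e1 : M *m adj P = (rho * s) *: (P *m M).
  by rewrite er -scalemxAr es scalerA -mulrA ss mulr1.
have e2 : P *m M *m adj P = s *: M.
  by rewrite es -scalemxAl -mulmxA (pauli_unitary hP) mulmx1.
rewrite e1 e2 !scalerA.
have hR : is_pauli (P *m M) by apply: pauli_mul.
have hrs : rho * s = 1 \/ rho * s = -1.
  by case: hr => ->; case: hs => ->; rewrite ?mul1r ?mulN1r ?opprK; auto.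
ord4 k; rewrite /sigma /=.
- have := diagP hM (or_introl (erefl (1 : C))) hs; simpM; apply.
- have := offP hR (is4_1 C) (_ : rho * s = 1 \/ rho * s = - 1); simpM; apply; exact: hrs.
- have hx : - 'i * (rho * s) = 'i \/ - 'i * (rho * s) = - 'i.
    by case: hrs => ->; rewrite ?mulr1 ?mulrN1 ?opprK; auto.
  have := offP hR (is4_i C) hx; simpM; apply.
- have hy : -1 * s = 1 \/ -1 * s = -1.
    by case: hs => ->; rewrite ?mulr1 ?mulN1r ?opprK; auto.
  have := diagP hM (or_introl (erefl (1 : C))) hy; simpM; apply.
Qed.

End Work8.



Section Work9.
Variable C : numClosedFieldType.

Lemma ctrl_T1 n (U : 'M[C]_(2 ^ n)) A : unitary U ->
  ctrl U *m T A 1%:M *m adj (ctrl U) =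
  blk (A false false *: 1%:M) (A false true *: adj U) (A true false *: U) (A true true *: 1%:M).
Proof. by move=> hU; rewrite ctrl_T mul1mx mulmx1 hU. Qed.

Lemma E_off n (U : 'M[C]_(2 ^ n)) A : A false false = 0 -> A true true = 0 -> unitary U ->
  ctrl U *m T A 1%:M *m adj (ctrl U) = idT (adj U) *m ctrl (U *m U) *m T A 1%:M.
Proof.
move=> h1 h2 hU; rewrite ctrl_T1 // ctrlE /idT /T blk_mul h1 h2; simpM.
rewrite mulmxA (unitaryV hU) mul1mx blk_mul; simpM.
by rewrite -!scalemxAr !mulmx1.
Qed.

Lemma pauli_split n (P : 'M[C]_(2 ^ n.+1)) : is_pauli P ->
  exists k (Q : 'M[C]_(2 ^ n)), is_pauli Q /\ P = T (sigma C k) 1%:M *m idT Q.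
Proof.
move=> /pauli_dec [k [Q [hQ ->]]]; exists k, Q; split => //.
by rewrite idTE T_mul mul1mx (T_ext _ (sig0r _)).
Qed.

Lemma diag_ctrl n (U Q : 'M[C]_(2 ^ n)) : is_pauli Q ->
  ctrl U *m idT Q *m adj (ctrl U) = idT Q *m ctrl (adj Q *m (U *m Q *m adj U)).
Proof.
move=> hQ; rewrite idTE ctrl_T /T /sigma /= ctrlE blk_mul; simpM.
by rewrite mulmxA (pauli_unitary hQ) mul1mx.
Qed.

Lemma ctrl_biclif n (R : 'M[C]_(2 ^ n)) : is_pauli R -> biclif (ctrl R).
Proof.
move=> h; split; first exact: ctrl_pauli_clif.
by rewrite ctrl_adj; apply: ctrl_pauli_clif; apply: pauli_adj.
Qed.

Lemma X_pauli n (k : 'I_4) : is_pauli (T (sigma C k) (1%:M : 'M[C]_(2 ^ n))).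
Proof. by apply: pauli_cons; apply: pauli_one. Qed.

Lemma conj_split n (V X Y : 'M[C]_(2 ^ n)) : unitary V ->
  V *m (X *m Y) *m adj V = (V *m X *m adj V) *m (V *m Y *m adj V).
Proof.
move=> hV; have h := unitaryV hV.
by rewrite -!mulmxA (mulmxA (adj V)) h mul1mx.
Qed.

Lemma step_mem j n (U : 'M[C]_(2 ^ n)) : clif U -> clif (adj U) ->
  hier_aux j.+1 (ctrl (U *m U)) -> hier_aux j.+2 (ctrl U).
Proof.
move=> hU hU' hUU; have uU := clif_unitary hU.
split; first exact: ctrl_unitary.
move=> P /pauli_split [k [Q [hQ ->]]].
rewrite conj_split; last exact: ctrl_unitary.
rewrite diag_ctrl //.
have hR : is_pauli (adj Q *m (U *m Q *m adj U)).
  by apply: pauli_mul; [apply: pauli_adj|apply: clif_pauli].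
have hD : biclif (idT Q *m ctrl (adj Q *m (U *m Q *m adj U))).
  apply: biclif_mul; last exact: ctrl_biclif.
  by apply: pauli_biclif; rewrite idTE; apply: pauli_cons.
have hUb : biclif (idT (adj U)) by apply: idT_biclif; split; rewrite ?adj_adj.
have key : forall k : 'I_4, sigma C k false false = 0 -> sigma C k true true = 0 ->
  hier_aux j.+1 (ctrl U *m T (sigma C k) 1%:M *m adj (ctrl U) *m
                 (idT Q *m ctrl (adj Q *m (U *m Q *m adj U)))).
  move=> k' h1 h2; rewrite E_off // -!mulmxA.
  apply: left_mul => //; apply: right_mul => //.
  apply: clif_mul; first by apply: pauli_clif; apply: X_pauli.
  by move: hD; rewrite -!mulmxA => -[].
have diagk : forall k : 'I_4, sigma C k false true = 0 -> sigma C k true false = 0 ->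
  hier_aux j.+1 (ctrl U *m T (sigma C k) 1%:M *m adj (ctrl U) *m
                 (idT Q *m ctrl (adj Q *m (U *m Q *m adj U)))).
  move=> k' h1 h2; rewrite ctrl_T1 // h1 h2 !scale0r.
  have -> : blk (sigma C k' false false *: 1%:M) 0 0 (sigma C k' true true *: 1%:M)
     = T (sigma C k') (1%:M : 'M[C]_(2 ^ n)) by rewrite /T h1 h2 !scale0r.
  apply: hier_up; apply: clif_mul; last by case: hD.
  by apply: pauli_clif; apply: X_pauli.
by ord4 k; [apply: diagk|apply: key|apply: key|apply: diagk].
Qed.

Lemma XX n : T (sigma C (@o4 1 isT)) (1%:M : 'M[C]_(2 ^ n)) *m T (sigma C (@o4 1 isT)) 1%:M = 1%:M.
Proof. by rewrite T_mul mul1mx (T_ext _ (sig_sq C _)) T_one. Qed.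

Lemma step_non j n (U : 'M[C]_(2 ^ n)) : clif U -> clif (adj U) ->
  hier_aux j.+2 (ctrl U) -> hier_aux j.+1 (ctrl (U *m U)).
Proof.
move=> hU hU' [uV hV]; have uU := clif_unitary hU.
have h := hV _ (X_pauli n (@o4 1 isT)).
rewrite E_off // in h.
have hUb : biclif (idT U) by apply: idT_biclif; split.
have := right_mul (pauli_clif (X_pauli n (@o4 1 isT))) (left_mul hUb h).
by rewrite !mulmxA idT_mul uU idT_one mul1mx -mulmxA XX mulmx1.
Qed.

Lemma pauli_nz n (M : 'M[C]_(2 ^ n)) : is_pauli M -> M <> 0.
Proof.
move=> h e; have := pauli_unitary h; rewrite e mul0mx => /matrixP.
have hn : (0 < 2 ^ n)%N by rewrite expn_gt0.
move/(_ (Ordinal hn) (Ordinal hn)); rewrite !mxE eqxx /= => /eqP.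
by rewrite eq_sym oner_eq0.
Qed.

Lemma base_non n (U : 'M[C]_(2 ^ n)) : unitary U -> hier_aux 1 (ctrl U) -> is_pauli U.
Proof.
move=> uU hV; have := clif_pauli hV (X_pauli n (@o4 1 isT)).
rewrite ctrl_T1 // /sigma /= => /pauli_dec [k [M [hM]]].
rewrite /T => /blk_inj [e1 _ e3 _].
move: e1 e3; ord4 k; rewrite /sigma /= => e1 e3.
- by exfalso; apply: (pauli_nz hM); rewrite -[M]scale1r -e1 scale0r.
- by rewrite -[U]scale1r e3 scale1r.
- by rewrite -[U]scale1r e3; apply: pauli_scale hM; apply: is4_i.
- by exfalso; apply: (pauli_nz hM); rewrite -[M]scale1r -e1 scale0r.
Qed.

Lemma mxpowD d (U : 'M[C]_d) a b : mxpow U (a + b) = mxpow U a *m mxpow U b.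
Proof.
elim: a => [|a IH]; first by rewrite add0n /mxpow /= mul1mx.
by rewrite addSn /mxpow /= -/(mxpow U (a + b)) IH mulmxA.
Qed.

Lemma mxpow_sq d (U : 'M[C]_d) e : mxpow (U *m U) e = mxpow U (e + e).
Proof.
elim: e => [|e IH] //.
rewrite addSn addnS /mxpow /= -/(mxpow U (e + e)) -/(mxpow (U *m U) e) IH.
by rewrite mulmxA.
Qed.

Lemma mxpow_clif n (U : 'M[C]_(2 ^ n)) e : clif U -> clif (mxpow U e).
Proof.
move=> h; elim: e => [|e IH]; first by apply: pauli_clif; apply: pauli_one.
exact: clif_mul.
Qed.

Lemma clif_adj_pow n (U : 'M[C]_(2 ^ n)) e : clif U -> is_pauli (mxpow U e.+1) -> clif (adj U).
Proof.
move=> hU hP.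
have -> : adj U = mxpow U e *m adj (mxpow U e.+1).
  rewrite -[adj U]mulmx1 -(pauli_unitary hP) /mxpow /= -/(mxpow U e).
  by rewrite !mulmxA (unitaryV (clif_unitary hU)) mul1mx.
apply: clif_mul; first exact: mxpow_clif.
by apply: pauli_clif; apply: pauli_adj.
Qed.

Lemma mem j : forall n (U : 'M[C]_(2 ^ n)), clif U -> clif (adj U) ->
  is_pauli (mxpow U (2 ^ j)) -> hier_aux j.+1 (ctrl U).
Proof.
elim: j => [|j IH] n U hU hU' hP.
  by apply: ctrl_pauli_clif; move: hP; rewrite expn0 /mxpow /= mulmx1.
apply: step_mem => //; apply: IH.
- exact: clif_mul.
- by rewrite adj_mul; apply: clif_mul.
- by rewrite mxpow_sq addnn -mul2n -expnS.
Qed.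

Lemma non j : forall n (U : 'M[C]_(2 ^ n)), clif U -> clif (adj U) ->
  hier_aux j.+1 (ctrl U) -> is_pauli (mxpow U (2 ^ j)).
Proof.
elim: j => [|j IH] n U hU hU' hV.
  by rewrite expn0 /mxpow /= mulmx1; apply: base_non => //; apply: clif_unitary.
have := IH n (U *m U) (clif_mul hU hU) _ (step_non hU hU' hV).
rewrite mxpow_sq addnn -mul2n -expnS; apply.
by rewrite adj_mul; apply: clif_mul.
Qed.

End Work9.

Theorem mainTheorem2 (C : numClosedFieldType) (n m : nat) (U : 'M[C]_(2 ^ n)) :
  (1 <= n)%N -> (1 <= m)%N ->
  in_clifford_hierarchy 2 U ->
  pauli_periodicity U m ->
  in_clifford_hierarchy (m + 2) (ctrl U) /\ ~ in_clifford_hierarchy (m + 1) (ctrl U).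
Proof.
move=> _ hm hU [hP hmin].
have hU1 : clif U := hU.
have hU' : clif (adj U).
  have hpos : (0 < 2 ^ m)%N by rewrite expn_gt0.
  apply: (@clif_adj_pow _ _ U (2 ^ m).-1 hU1); by rewrite prednK.
split.
  by rewrite /in_clifford_hierarchy addn2 /=; apply: mem.
rewrite /in_clifford_hierarchy addn1 /=.
case: m hm hP hmin => [//|m] _ hP hmin hV.
exact: (hmin m (ltnSn m) (non hU1 hU' hV)).
Qed.
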